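(* Let $A$ be a finite-dimensional complex evolution algebra with natural basis $B=\{e_1,\dots,e_n\}$ and structure matrix $W=(\omega_{ij})$ (so $e_j^2=\sum_i\omega_{ij}e_i$). Then $A$ is m-semisimple if and only if for every $i=1,\dots,n$ there exists $a=\sum_{k=1}^n\alpha_ke_k\in\mathrm{lin}\{e_j^2:j\in D(i)\cup\{i\}\}$ such that the matrix $W\,\mathrm{diag}(\alpha_1,\dots,\alpha_n)$ has a non-zero eigenvalue.
   Context: An evolution algebra is an algebra with a basis $\{e_i\}$ (natural basis) with $e_ie_j=0$ for $i\neq j$. Descendents: $D^1(i)=\{j:\omega_{ji}\neq0\}$, $D^n(i)=\bigcup_{j\in D^{n-1}(i)}D^1(j)$, $D(i)=\bigcup_{n\ge1}D^n(i)$. For a complex algebra $A$: if $A$ has a unit $e$ put $\tilde A=A$, else $\tilde A=A\oplus\mathbb{C}\mathbf1$ (unitization, product $(a+\lambda\mathbf1)(b+\mu\mathbf1)=ab+\lambda b+\mu a+\lambda\mu\mathbf1$, $e=\mathbf1$). $x\in\tilde A$ is m-invertible if $L_x(y)=xy$ and $R_x(y)=yx$ are bijective on $\tilde A$; the m-spectrum is $\sigma^A_m(a)=\{\lambda\in\mathbb{C}:a-\lambda e\text{ not m-invertible}\}$ and $\rho_m(a)=\sup\{|\lambda|:\lambda\in\sigma^A_m(a)\}$ ($=0$ if empty). $A$ is m-semisimple if $\{0\}$ is the only ideal of $A$ contained in $\{a\in A:\rho_m(a)=0\}$. *)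

(* Defs.v *)
From HB Require Import structures.
From mathcomp Require Import all_boot all_order all_algebra.
Set Implicit Arguments. Unset Strict Implicit. Unset Printing Implicit Defensive.
Import Order.TTheory GRing.Theory Num.Theory.
Local Open Scope ring_scope.

(* The evolution algebra A = C^n with natural basis e_1..e_n (the standard
   basis of column vectors) and structure matrix W: e_j^2 = sum_i W i j e_i,
   e_i e_j = 0 (i <> j). *)
Definition evmul (C : numClosedFieldType) (n : nat) (W : 'M[C]_n)
  (x y : 'cV[C]_n) : 'cV[C]_n := W *m (\col_i (x i 0 * y i 0)).

Definition is_unit_elt (C : numClosedFieldType) (n : nat) (W : 'M[C]_n)
  (e : 'cV[C]_n) : Prop :=
  forall x, evmul W e x = x /\ evmul W x e = x.

Definition unital (C : numClosedFieldType) (n : nat) (W : 'M[C]_n) : Prop :=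
  exists e, is_unit_elt W e.

(* product in the unitization A (+) C1 : (a + l1)(b + m1) = ab + l b + m a + l m 1 *)
Definition uprod (C : numClosedFieldType) (n : nat) (W : 'M[C]_n)
  (x y : 'cV[C]_n * C) : 'cV[C]_n * C :=
  (evmul W x.1 y.1 + x.2 *: y.1 + y.2 *: x.1, x.2 * y.2).

Definition m_inv_A (C : numClosedFieldType) (n : nat) (W : 'M[C]_n)
  (x : 'cV[C]_n) : Prop :=
  bijective (evmul W x) /\ bijective (fun y => evmul W y x).

Definition m_inv_unitz (C : numClosedFieldType) (n : nat) (W : 'M[C]_n)
  (x : 'cV[C]_n * C) : Prop :=
  bijective (uprod W x) /\ bijective (fun y => uprod W y x).

Definition m_spec (C : numClosedFieldType) (n : nat) (W : 'M[C]_n)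
  (a : 'cV[C]_n) (lam : C) : Prop :=
  (exists e, is_unit_elt W e /\ ~ m_inv_A W (a - lam *: e))
  \/ (~ unital W /\ ~ m_inv_unitz W (a, - lam)).

(* rho_m(a) = 0, i.e. sup {|lam| : lam in sigma_m(a)} = 0 (with sup of the
   empty set equal to 0): every element of the m-spectrum has modulus 0. *)
Definition rho_m_zero (C : numClosedFieldType) (n : nat) (W : 'M[C]_n)
  (a : 'cV[C]_n) : Prop :=
  forall lam, m_spec W a lam -> `|lam| = 0.

Definition is_ideal (C : numClosedFieldType) (n : nat) (W : 'M[C]_n)
  (I : 'cV[C]_n -> Prop) : Prop :=
  [/\ I 0,
      (forall x y, I x -> I y -> I (x + y)),
      (forall (c : C) x, I x -> I (c *: x)),
      (forall x a, I x -> I (evmul W a x))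
    & (forall x a, I x -> I (evmul W x a))].

Definition m_semisimple (C : numClosedFieldType) (n : nat) (W : 'M[C]_n)
  : Prop :=
  forall I, is_ideal W I -> (forall x, I x -> rho_m_zero W x) ->
    forall x, I x -> x = 0.

(* descn W m i = D^(m+1)(i);  D^1(i) = { j | W j i <> 0 } *)
Fixpoint descn (C : numClosedFieldType) (n : nat) (W : 'M[C]_n)
  (m : nat) (i : 'I_n) : 'I_n -> Prop :=
  match m with
  | 0 => fun j => W j i != 0
  | m'.+1 => fun k => exists j, descn W m' i j /\ W k j != 0
  end.

Definition desc (C : numClosedFieldType) (n : nat) (W : 'M[C]_n)
  (i j : 'I_n) : Prop := exists m, descn W m i j.

(* a \in lin { e_j^2 : j \in D(i) \cup {i} }, where e_j^2 = col j W *)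
Definition in_lin_desc (C : numClosedFieldType) (n : nat) (W : 'M[C]_n)
  (i : 'I_n) (a : 'cV[C]_n) : Prop :=
  exists c : 'I_n -> C,
    (forall j, ~ (j = i \/ desc W i j) -> c j = 0) /\
    a = \sum_j c j *: col j W.

(* Main.v *)
Require Import Defs.
From HB Require Import structures.
From mathcomp Require Import all_boot all_order all_algebra.
From Stdlib Require Import Classical.
Set Implicit Arguments. Unset Strict Implicit. Unset Printing Implicit Defensive.
Import Order.TTheory GRing.Theory Num.Theory.
Local Open Scope ring_scope.

Section Helpers.
Variables (C : numClosedFieldType) (n : nat) (W : 'M[C]_n).

Lemma evmulE x y : evmul W x y = (W *m diag_mx x^T) *m y.
Proof.
rewrite /evmul -mulmxA mul_diag_mx; congr (_ *m _).
by apply/matrixP => i j; rewrite !mxE (ord1 j).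
Qed.

Lemma evmulC x y : evmul W x y = evmul W y x.
Proof. by rewrite /evmul; congr (_ *m _); apply/matrixP => i j; rewrite !mxE mulrC. Qed.

Lemma evmul0r x : evmul W x 0 = 0.
Proof. by rewrite evmulE mulmx0. Qed.

Lemma evmul_delta k x : evmul W (delta_mx k 0) x = x k 0 *: col k W.
Proof.
rewrite /evmul colE scalemxAr; congr (_ *m _).
apply/matrixP => i j; rewrite !mxE (ord1 j) eqxx andbT.
by case: (eqVneq i k) => [->|_]; rewrite ?mulr1 ?mul1r ?mulr0 ?mul0r.
Qed.

Lemma evmulBZl x z c y : evmul W (x - c *: z) y = evmul W x y - c *: evmul W z y.
Proof.
rewrite /evmul.
have -> : \col_i ((x - c *: z) i 0 * y i 0) =
   \col_i (x i 0 * y i 0) - c *: \col_i (z i 0 * y i 0).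
  by apply/matrixP => i j; rewrite !mxE mulrBl mulrA.
by rewrite mulmxBr scalemxAr.
Qed.

Lemma mulmx_col_sum (y : 'cV[C]_n) : W *m y = \sum_k y k 0 *: col k W.
Proof.
apply/matrixP => i j; rewrite (ord1 j) !mxE summxE; apply: eq_bigr => k _.
by rewrite !mxE mulrC.
Qed.

Definition Nm (a : 'cV[C]_n) lam := W *m diag_mx a^T - lam%:M.

Lemma eig_det a lam : eigenvalue (W *m diag_mx a^T) lam = (\det (Nm a lam) == 0).
Proof.
apply/eigenvalueP/det0P => [[v Hv Hnz] | [v Hnz Hv]]; exists v => //.
  by rewrite /Nm mulmxBr Hv mul_mx_scalar subrr.
by apply/eqP; rewrite -subr_eq0 -mul_mx_scalar -mulmxBr; apply/eqP.
Qed.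

Lemma bij_ext (A B : Type) (f g : A -> B) : (forall y, f y = g y) -> bijective f -> bijective g.
Proof. by move=> E [h K1 K2]; exists h => y; rewrite -?E ?K1 ?K2 // -E K2. Qed.

Lemma bij_unit (N : 'M[C]_n) : N \in unitmx -> bijective (fun y : 'cV[C]_n => N *m y).
Proof. by move=> U; exists (fun y => invmx N *m y) => y; rewrite ?mulKmx ?mulKVmx. Qed.

Lemma uprodC x y : uprod W x y = uprod W y x.
Proof. rewrite /uprod evmulC mulrC; congr pair; rewrite -!addrA; congr (_ + _); exact: addrC. Qed.

Lemma uprod_N a lam y nu :
  uprod W (a, - lam) (y, nu) = (Nm a lam *m y + nu *: a, - lam * nu).
Proof.
rewrite /uprod /= evmulE /Nm mulmxBl mul_scalar_mx scaleNr.
by [].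
Qed.

Lemma P1 a lam : m_spec W a lam -> lam != 0 -> eigenvalue (W *m diag_mx a^T) lam.
Proof.
move=> Hs Hl; case: (boolP (eigenvalue _ _)) => // Hne; exfalso.
have U : Nm a lam \in unitmx by rewrite unitmxE unitfE -eig_det.
case: Hs => [[e [He Hn]] | [_ Hn]]; apply: Hn.
  have E : forall y, Nm a lam *m y = evmul W (a - lam *: e) y.
    move=> y; rewrite evmulBZl (proj1 (He y)) evmulE /Nm mulmxBl mul_scalar_mx //.
  split; first exact: bij_ext E (bij_unit U).
  by apply: bij_ext (bij_unit U) => y; rewrite E evmulC.
have Hm : - lam != 0 by rewrite oppr_eq0.
have B : bijective (uprod W (a, - lam)).
  exists (fun zt : 'cV[C]_n * C => (invmx (Nm a lam) *m (zt.1 - (zt.2 / - lam) *: a), zt.2 / - lam)).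
    case=> y nu; rewrite uprod_N /= mulrC mulKf // addrK mulKmx //.
  case=> z t; rewrite uprod_N /= mulKVmx // subrK mulrC divfK //.
split => //; by apply: bij_ext B => y; rewrite uprodC.
Qed.


Lemma ker_col a lam : eigenvalue (W *m diag_mx a^T) lam ->
  exists2 v : 'cV[C]_n, v != 0 & Nm a lam *m v = 0.
Proof.
rewrite eig_det -det_tr => /det0P [u Hu Hm].
exists u^T; first by apply: contra Hu => /eqP H0; apply/eqP; apply: trmx_inj; rewrite H0 trmx0.
by rewrite -[Nm a lam]trmxK -trmx_mul Hm trmx0.
Qed.

Lemma P2 a lam : lam != 0 -> eigenvalue (W *m diag_mx a^T) lam -> m_spec W a lam.
Proof.
move=> Hl /ker_col [v Hv HN].
case: (classic (unital W)) => [[e He] | Hu].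
  left; exists e; split => // -[[g K1 K2] _].
  have E : forall y, evmul W (a - lam *: e) y = Nm a lam *m y.
    move=> y; rewrite evmulBZl (proj1 (He y)) evmulE /Nm mulmxBl mul_scalar_mx //.
  have := K1 v; have := K1 0; rewrite !E HN mulmx0 => H1 H2.
  by move: Hv; rewrite -H2 H1 eqxx.
right; split => // -[[g K1 K2] _].
have := K1 (v, 0); have := K1 (0, 0); rewrite !uprod_N HN mulmx0 scale0r addr0 mulr0.
by move=> -> [] /eqP; rewrite eq_sym (negbTE Hv).
Qed.

Lemma rho_iff a : rho_m_zero W a <->
  ~ exists lam, lam != 0 /\ eigenvalue (W *m diag_mx a^T) lam.
Proof.
split.
  move=> H [lam [Hl He]]; move/eqP: (H lam (P2 Hl He)); rewrite normr_eq0.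
  by rewrite (negbTE Hl).
move=> H lam Hs; case: (eqVneq lam 0) => [->|Hl]; first by rewrite normr0.
by exfalso; apply: H; exists lam; split => //; apply: P1.
Qed.


Lemma step (I : 'cV[C]_n -> Prop) y k : is_ideal W I -> I y -> y k 0 != 0 -> I (col k W).
Proof.
case=> _ _ HZ HL _ Hy Hk.
have -> : col k W = (y k 0)^-1 *: evmul W (delta_mx k 0) y.
  by rewrite evmul_delta scalerA mulVf // scale1r.
by apply: HZ; apply: HL.
Qed.

Lemma lin_ideal i : is_ideal W (in_lin_desc W i).
Proof.
have HL : forall x b, in_lin_desc W i x -> in_lin_desc W i (evmul W b x).
  move=> x b [c [Hc ->]].
  set x' := \sum_j c j *: col j W.
  exists (fun k => b k 0 * x' k 0); split; last first.
    by rewrite /evmul mulmx_col_sum; apply: eq_bigr => k _; rewrite mxE.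
  move=> k Hk; apply/eqP; rewrite mulf_eq0; apply/orP; right.
  rewrite /x' summxE big1 // => j _; rewrite !mxE.
  case: (eqVneq (W k j) 0) => [->|Hw]; first by rewrite mulr0.
  case: (classic (j = i \/ desc W i j)) => [Hj|Hj]; last by rewrite Hc // mul0r.
  exfalso; apply: Hk; right; case: Hj => [E|[m Hm]].
    by subst j; exists 0%N.
  by exists m.+1; exists j.
split.
- by exists (fun _ => 0); split => //; rewrite big1 // => j _; rewrite scale0r.
- move=> x y [c [Hc ->]] [d [Hd ->]]; exists (fun j => c j + d j); split.
    by move=> j Hj; rewrite Hc ?Hd ?addr0.
  by rewrite -big_split; apply: eq_bigr => j _; rewrite scalerDl.
- move=> k x [c [Hc ->]]; exists (fun j => k * c j); split.
    by move=> j Hj; rewrite Hc ?mulr0.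
  by rewrite scaler_sumr; apply: eq_bigr => j _; rewrite scalerA.
- by move=> x b Hx; apply: HL.
- by move=> x b Hx; rewrite evmulC; apply: HL.
Qed.

End Helpers.

Theorem corollary5p9 (C : numClosedFieldType) (n : nat) (W : 'M[C]_n) :
  m_semisimple W <->
  (forall i : 'I_n, exists a : 'cV[C]_n,
     in_lin_desc W i a /\
     exists lam : C, lam != 0 /\ eigenvalue (W *m diag_mx a^T) lam).
Proof.
split.
  move=> Hss i; apply: NNPP => Hno.
  have Hc0 : col i W = 0.
    apply: (Hss _ (lin_ideal W i)).
      by move=> x Hx; apply/rho_iff => -[lam [Hl He]]; apply: Hno; exists x; split => //; exists lam.
    exists (fun j => (j == i)%:R); split.
      move=> j Hj; case: (eqVneq j i) => [E|_]; last by [].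
      by exfalso; apply: Hj; left.
    rewrite (bigD1 i) //= eqxx scale1r big1 ?addr0 // => j /negPf ->.
    by rewrite scale0r.
  have Hev : forall (b : 'cV[C]_n) (c : C), evmul W b (c *: delta_mx i 0) = 0.
    move=> b c; rewrite /evmul.
    have -> : (\col_j (b j 0 * (c *: (delta_mx i 0 : 'cV[C]_n)) j 0) : 'cV[C]_n) = (b i 0 * c) *: delta_mx i 0.
      apply/matrixP => p q; rewrite !mxE (ord1 q) eqxx andbT.
      by case: (eqVneq p i) => [->|_]; rewrite ?mulr1 ?mulr0.
    by rewrite -scalemxAr -colE Hc0 scaler0.
  have Hid : is_ideal W (fun x => exists c, x = c *: delta_mx i 0).
    split.
    - by exists 0; rewrite scale0r.
    - by move=> x y [c ->] [d ->]; exists (c + d); rewrite scalerDl.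
    - by move=> k x [c ->]; exists (k * c); rewrite scalerA.
    - by move=> x b [c ->]; exists 0; rewrite Hev scale0r.
    - by move=> x b [c ->]; exists 0; rewrite evmulC Hev scale0r.
  have := Hss _ Hid.
  have Hrho : forall x, (exists c, x = c *: delta_mx i 0) -> rho_m_zero W x.
    move=> x [c ->]; apply/rho_iff => -[lam [Hl /eigenvalueP [v Hv Hnz]]].
    have HM : W *m diag_mx (c *: delta_mx i 0)^T = 0.
      rewrite mul_mx_diag; apply/matrixP => p q; rewrite !mxE.
      case: (eqVneq q i) => [->|Hq]; last by rewrite /= !mulr0.
      by move/matrixP: Hc0 => /(_ p 0); rewrite !mxE => ->; rewrite mul0r.
    move: Hv; rewrite HM mulmx0 => /esym/eqP; rewrite scaler_eq0 (negbTE Hl) /=.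
    by apply/negP.
  move=> /(_ Hrho (delta_mx i 0)) Hf; have := Hf (ex_intro _ 1 (esym (scale1r _))).
  by move/matrixP => /(_ i 0); rewrite !mxE !eqxx /= => /eqP; rewrite oner_eq0.
move=> Hall I HI Hrho x Hx.
apply/matrixP => p q; rewrite (ord1 q) mxE.
case: (eqVneq (x p 0) 0) => // Hxp; exfalso.
have [a [[c [Hc Ha]] [lam [Hl He]]]] := Hall p.
have Hcol : forall j, (j = p \/ desc W p j) -> I (col j W).
  have Hp : I (col p W) by apply: step HI Hx Hxp.
  move=> j [->|[m Hm]] //.
  elim: m j Hm => [|m IH] j /=.
    by move=> Hw; apply: (step HI Hp); rewrite mxE.
  by move=> [j' [Hd Hw]]; apply: (step HI (IH _ Hd)); rewrite mxE.
have HIa : I a.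
  case: HI => H0 HD HZ _ _; rewrite Ha.
  apply: (big_ind I) => // j _.
  case: (classic (j = p \/ desc W p j)) => Hj; first by apply: HZ; apply: Hcol.
  by rewrite Hc // scale0r.
by move/rho_iff: (Hrho _ HIa); apply; exists lam.
Qed.
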